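(* Let $\mathcal{X}$ be a Banach space and $J:\mathcal{X}\to\mathbb{R}\cup\{\infty\}$ a convex, absolutely one-homogeneous functional. Let $v\in\mathcal{X}$ and $p\in\partial J(v)$. Then the set $$\mathcal{M}^{\mathrm{IC}}=\{u\in\mathcal{X}\ :\ [D_J^p(\cdot,v)\,\Box\, D_J^{-p}(\cdot,-v)](u)=0\}$$ is a nonempty linear subspace of $\mathcal{X}$.
   Context: Absolutely one-homogeneous: $J(\lambda u)=|\lambda|J(u)$ for all $\lambda\in\mathbb{R}$. Bregman distance: $D_J^{q}(u,w)=J(u)-J(w)-\langle q,u-w\rangle$ for $q\in\partial J(w)$ (note $-p\in\partial J(-v)$). The infimal convolution of $F,G:\mathcal{X}\to\mathbb{R}\cup\{\infty\}$ is $(F\Box G)(u)=\inf_{z\in\mathcal{X}}F(u-z)+G(z)$. *)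

(* Defs.v *)
From HB Require Import structures.
From mathcomp Require Import all_boot all_order all_algebra.
From mathcomp Require Import all_classical all_reals all_analysis.
Set Implicit Arguments. Unset Strict Implicit. Unset Printing Implicit Defensive.
Import Order.TTheory GRing.Theory Num.Theory.
Import numFieldNormedType.Exports.
Local Open Scope classical_set_scope.
Local Open Scope ring_scope.

Section Defs.
Context {R : realType} {X : completeNormedModType R}.

(* elements of the (topological) dual X^* : continuous linear functionals;
   the pairing <q, u> is q u *)
Definition is_dual (q : X -> R) : Prop :=
  (forall (a : R) (x y : X), q (a *: x + y) = a * q x + q y) /\ continuous q.

(* J : X -> R ∪ {+oo} *)
Definition proper_valued (J : X -> \bar R) : Prop := forall x, J x != -oo%E.

Definition convex_fun (J : X -> \bar R) : Prop :=
  forall (t : R) (x y : X), 0 < t -> t < 1 ->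
    (J (t *: x + (1 - t) *: y)%R <= t%:E * J x + (1 - t)%:E * J y)%E.

Definition abs_one_homogeneous (J : X -> \bar R) : Prop :=
  forall (l : R) (u : X), J (l *: u)%R = (`|l|%:E * J u)%E.

Definition subdiff (J : X -> \bar R) (w : X) (q : X -> R) : Prop :=
  is_dual q /\ forall u, (J w + (q (u - w)%R)%:E <= J u)%E.

Definition bregman (J : X -> \bar R) (q : X -> R) (u w : X) : \bar R :=
  (J u - J w - (q (u - w)%R)%:E)%E.

Definition infconv (F G : X -> \bar R) (u : X) : \bar R :=
  ereal_inf (range (fun z => (F (u - z)%R + G z)%E)).

End Defs.

(* Main.v *)
Require Import Defs.
From HB Require Import structures.
From mathcomp Require Import all_boot all_order all_algebra.
From mathcomp Require Import all_classical all_reals all_analysis.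
From mathcomp Require Import ring lra.
Import Order.TTheory GRing.Theory Num.Theory.
Import numFieldNormedType.Exports.
Local Open Scope classical_set_scope.
Local Open Scope ring_scope.

Section Aux.
Context {R : realType} {X : completeNormedModType R} (J : X -> \bar R) (p : X -> R).
Hypothesis lin : forall (a : R) (x y : X), p (a *: x + y) = a * p x + p y.
Hypothesis Jh : abs_one_homogeneous J.
Hypothesis Jge : forall x, ((p x)%:E <= J x)%E.

Lemma p0 : p 0 = 0.
Proof. have := lin 1 0 0; rewrite scale1r addr0 mul1r; lra. Qed.
Lemma pD x y : p (x + y) = p x + p y.
Proof. by rewrite -[x in LHS]scale1r lin mul1r. Qed.
Lemma pZ a x : p (a *: x) = a * p x.
Proof. by rewrite -[_ *: x]addr0 lin p0 addr0. Qed.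
Lemma pN x : p (- x) = - p x.
Proof. by rewrite -scaleN1r pZ mulN1r. Qed.
Lemma JN x : J (- x) = J x.
Proof. by rewrite -scaleN1r Jh normrN normr1 mul1e. Qed.

Definition F x := (J x - (p x)%:E)%E.

Lemma F_ge0 x : (0 <= F x)%E.
Proof. by rewrite /F sube_ge0 //; apply/orP; left. Qed.

Lemma F0 : F 0 = 0%E.
Proof.
rewrite /F p0 -(scale0r (0:X)) Jh normr0 mul0e; by rewrite sube0.
Qed.

Lemma FZ a x : 0 < a -> F (a *: x) = (a%:E * F x)%E.
Proof.
move=> a0; rewrite /F Jh pZ gtr0_norm //.
have := Jge x; case: (J x) => [r| |] //=.
- move=> _; rewrite -EFinM; congr EFin; ring.
- move=> _; rewrite gt0_muley ?lte_fin //.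
Qed.

Hypothesis Jconv : convex_fun J.

Lemma JD (x y : X) : (J (x + y)%R <= J x + J y)%E.
Proof.
have t0 : (0:R) < 2^-1 by rewrite invr_gt0.
have t1 : (2^-1:R) < 1 by rewrite invf_lt1 // ltr1n.
have h := Jconv (2^-1) x y t0 t1.
have e : x + y = 2 *: (2^-1 *: x + (1 - 2^-1) *: y).
  by rewrite scalerDr !scalerA mulrBr mulfV // mulr1 (_ : 2 - 1 = 1) ?scale1r //; lra.
have ht : (1 - 2^-1 : R) = 2^-1 by rewrite {1}(splitr 1) mul1r addrK.
rewrite e Jh; move: h; rewrite ht.
have := Jge x; have := Jge y; have := Jge (2^-1 *: x + 2^-1 *: y).
case: (J x) => [a| |] //=; case: (J y) => [b| |] //=;
  case: (J _) => [c| |] //=; rewrite ?leey //.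
- rewrite -!EFinM -!EFinD !lee_fin => _ _ _ h.
  rewrite ger0_norm // -mulrDr in h *.
  by rewrite -(ler_pM2l t0) mulrA mulVf // mul1r.
Qed.

Lemma FD x y : (F (x + y)%R <= F x + F y)%E.
Proof.
rewrite /F pD; have := JD x y; have := Jge x; have := Jge y; have := Jge (x + y).
case: (J x) => [a| |] //=; case: (J y) => [b| |] //=;
  case: (J (x + y)) => [c| |] //=; rewrite ?leey //.
rewrite -!EFinD !lee_fin => *; lra.
Qed.

End Aux.

Lemma inf0P (R : realType) (T : Type) (h : T -> \bar R) :
  (forall z, 0 <= h z)%E ->
  ereal_inf (range h) = 0%E <-> forall e : R, 0 < e -> exists z, (h z < e%:E)%E.
Proof.
move=> h0; split.
- move=> i0 e e0; have : (ereal_inf (range h) < e%:E)%E by rewrite i0 lte_fin.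
  by move/ereal_inf_lt => [_ [z _ <-]] hz; exists z.
- move=> H; apply/eqP; rewrite eq_le; apply/andP; split.
  + apply/lee_addgt0Pr => e e0; rewrite add0e.
    have [z hz] := H e e0.
    by apply: le_trans (ltW hz); apply: ereal_inf_lbound; exists z.
  + by apply: le_ereal_inf_tmp => _ [z _ <-].
Qed.
Theorem theorem4 (R : realType) (X : completeNormedModType R)
  (J : X -> \bar R) (v : X) (p : X -> R) :
  proper_valued J -> convex_fun J -> abs_one_homogeneous J ->
  subdiff J v p ->
  let M := [set u : X | infconv (fun x => bregman J p x v)
                                (fun x => bregman J (fun y => - p y) x (- v)) u
                        = 0%E] in
  (exists u, M u) /\
  (forall u w, M u -> M w -> M (u + w)) /\
  (forall (a : R) u, M u -> M (a *: u)).
Proof.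
move=> Hprop Hconv Hhom [[lin _] Hsub] M.
have J0 : J 0 = 0%E by rewrite -(scale0r (0:X)) Hhom normr0 mul0e.
have Jv : J v = (p v)%:E.
  have h1 := Hsub 0; have h2 := Hsub (2 *: v).
  rewrite J0 add0r (pN _ lin) in h1.
  rewrite Hhom (_ : 2 *: v - v = v) in h2; last first.
    by rewrite -[X in _ - X]scale1r -scalerBl (_ : 2 - 1 = 1) ?scale1r //; lra.
  move: h1 h2 (Hprop v); case: (J v) => [r| |] //= h1 h2 _.
  rewrite -EFinD lee_fin in h1; rewrite ger0_norm // -EFinD -EFinM lee_fin in h2.
  congr EFin; lra.
have Jge : forall x, ((p x)%:E <= J x)%E.
  move=> x; have := Hsub x; rewrite Jv -EFinD.
  by rewrite (pD _ lin) (pN _ lin) addrC subrK.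
have B1 : (fun x => bregman J p x v) = F J p.
  apply: funext => x; rewrite /bregman /F Jv (pD _ lin) (pN _ lin).
  have := Jge x; case: (J x) => [r| |] //= _.
  by rewrite -?EFinN -!EFinD; congr EFin; ring.
have B2 : (fun x => bregman J (fun y => - p y) x (- v)) = (fun x => F J p (- x)).
  apply: funext => x; rewrite /bregman /F (JN _ Hhom) Jv (JN _ Hhom) (pN _ lin) (pD _ lin) (pN _ lin).
  have := Jge x; case: (J x) => [r| |] //= _.
  by rewrite -?EFinN -!EFinD (pN _ lin); congr EFin; ring.
have hge : forall u z : X, (0 <= F J p (u - z)%R + F J p (- z)%R)%E.
  by move=> u z; rewrite adde_ge0 // F_ge0.
have MP : forall u, M u <-> forall e : R, 0 < e -> exists z, (F J p (u - z)%R + F J p (- z)%R < e%:E)%E.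
  move=> u; rewrite /M /infconv /=.
  have E : (fun i => bregman J p (u - i)%R v + bregman J (fun y : X => (- p y)%R) i (- v)%R)%E
     = (fun z => F J p (u - z)%R + F J p (- z)%R)%E.
    by apply: funext => i; rewrite (congr1 (fun f => f (u - i)) B1) (congr1 (fun f => f i) B2).
  rewrite E; exact: inf0P (hge u).
have Mneg : forall u, M u -> M (- u).
  move=> u /MP Hu; apply/MP => e e0; have [z hz] := Hu e e0.
  exists (z - u); rewrite (_ : - u - (z - u) = - z); last first.
    by rewrite opprB addKr.
  by rewrite opprB addeC.
have Mpos : forall a u, 0 < a -> M u -> M (a *: u).
  move=> a u a0 /MP Hu; apply/MP => e e0.
  have [z hz] := Hu (e / a) (divr_gt0 e0 a0).
  exists (a *: z); rewrite -scalerBr -scalerN !(FZ _ _ lin Hhom Jge) //.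
  rewrite -ge0_muleDr ?F_ge0 //.
  rewrite (_ : e = a * (e / a)); last by rewrite mulrC divfK // gt_eqF.
  by rewrite EFinM lte_pmul2l ?lte_fin.
have M0 : M 0.
  apply/MP => e e0; exists 0; rewrite subr0 oppr0 (F0 _ _ lin Hhom) adde0 lte_fin //.
split; first by exists 0.
split.
- move=> u w /MP Hu /MP Hw; apply/MP => e e0.
  have e2 : 0 < e / 2 by rewrite divr_gt0.
  have [z1 h1] := Hu _ e2; have [z2 h2] := Hw _ e2.
  exists (z1 + z2).
  apply: (le_lt_trans (y := ((F J p (u - z1)%R + F J p (- z1)%R) + (F J p (w - z2)%R + F J p (- z2)%R))%E)).
    rewrite (addeACA (F J p (u - z1)%R)); apply: leeD.
      rewrite (_ : u + w - (z1 + z2) = (u - z1) + (w - z2)); last first.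
        by rewrite opprD addrACA.
      exact: (FD _ _ lin Hhom Jge Hconv).
    by rewrite opprD; exact: (FD _ _ lin Hhom Jge Hconv).
  by rewrite (splitr e) EFinD lteD.
- move=> a u Mu; case: (ltrgtP a 0) => a0.
  + rewrite -[a]opprK scaleNr; apply: Mneg; apply: Mpos => //; by rewrite oppr_gt0.
  + exact: Mpos.
  + by rewrite a0 scale0r.
Qed.
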